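(* Let $C$ be a compact Hausdorff space, and let $X$ be a topological space which is written in two ways as a topological coproduct $X=\bigsqcup_{i\in\mathbb{N}}C_i=\bigsqcup_{i\in\mathbb{N}}C'_i$ where for each $i$ there are homeomorphisms $\eta_i:C\to C_i$ and $\eta'_i:C\to C'_i$. Let $\pi,\pi':X\to\mathbb{N}$ be given by $\pi(C_i)=\{i\}$ and $\pi'(C'_i)=\{i\}$, and let $\varepsilon=\{e:\exists f\in\zeta,\ e\subseteq(\pi\times\pi)^{-1}(f)\}$ and $\varepsilon'=\{e:\exists f\in\zeta,\ e\subseteq(\pi'\times\pi')^{-1}(f)\}$, where $\zeta=\{f\subseteq\mathbb{N}\times\mathbb{N}: f\setminus\Delta\mathbb{N}\text{ finite}\}$. Let $Z$ be a compact metrizable space. If $X+_fZ\in\mathrm{Pers}(\varepsilon)$ and $X+_gZ\in\mathrm{Pers}(\varepsilon')$, then $X+_fZ$ and $X+_gZ$ are homeomorphic.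
   Context: Artin–Wraith glueing: $\mathrm{Closed}(A)$ is the set of closed subsets of $A$; $f:\mathrm{Closed}(A)\to\mathrm{Closed}(B)$ is admissible if $f(\emptyset)=\emptyset$ and $f$ preserves finite unions; $A+_fB$ is $A\sqcup B$ with closed sets the $D$ with $D\cap A$ closed in $A$, $D\cap B$ closed in $B$, $f(D\cap A)\subseteq D$. $\mathrm{Comp}(X)$: compact spaces $X+_fW$ with $W$ compact Hausdorff, morphisms continuous maps that are the identity on $X$. For a Hausdorff compactification $X+_fW$ of $X$ ($X$ dense), $e\subseteq X\times X$ is perspective if $\mathrm{Cl}_{(X+_fW)^2}(e)\cap((X+_fW)^2-X^2)\subseteq\{(p,p):p\in W\}$; $\varepsilon_f$ is the set of perspective sets; for a coarse structure $\varepsilon$, the compactification is perspective if $\varepsilon\subseteq\varepsilon_f$; $\mathrm{Pers}(\varepsilon)$ is the full subcategory of $\mathrm{Comp}(X)$ of perspective compactifications. The homeomorphism in the conclusion need not be the identity on $X$. *)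

(* Defs.v *)
From HB Require Import structures.
From mathcomp Require Import all_boot all_order all_algebra.
From mathcomp Require Import all_classical all_reals all_analysis.
Set Implicit Arguments. Unset Strict Implicit. Unset Printing Implicit Defensive.
Import Order.TTheory GRing.Theory Num.Theory.
Local Open Scope classical_set_scope.

(* Admissible maps Closed(A) -> Closed(B): represented as total maps on sets,
   of which only the values on closed sets matter. *)
Record admissible (A B : topologicalType) := Admissible {
  adm_map :> set A -> set B;
  adm_closed : forall D, closed D -> closed (adm_map D);
  adm_set0 : adm_map set0 = set0;
  adm_setU : forall D E, closed D -> closed E ->
    adm_map (D `|` E) = adm_map D `|` adm_map E }.

Definition awglue (X W : topologicalType) (f : admissible X W) : Type :=
  (X + W)%type.

Section Glue.
Context (X W : topologicalType) (f : admissible X W).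

Definition glue_closed (D : set (X + W)%type) :=
  [/\ closed (inl @^-1` D), closed (inr @^-1` D) &
      f (inl @^-1` D) `<=` inr @^-1` D].

Definition glue_open (U : set (X + W)%type) := glue_closed (~` U).

Lemma adm_mono (D E : set X) : closed D -> closed E -> D `<=` E -> f D `<=` f E.
Proof.
move=> cD cE DE; have -> : E = D `|` E by rewrite setUidr.
by rewrite adm_setU //; apply: subsetUl.
Qed.

Lemma glue_opT : glue_open setT.
Proof.
rewrite /glue_open /glue_closed setCT !preimage_set0 adm_set0.
by split => //; exact: closed0.
Qed.

Lemma glue_opI : setI_closed glue_open.
Proof.
move=> A B [cA1 cA2 sA] [cB1 cB2 sB]; rewrite /glue_open /glue_closed setCI.
rewrite !preimage_setU; split; [exact: closedU|exact: closedU|].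
rewrite adm_setU //; exact: setUSS.
Qed.

Lemma glue_op_bigU (I : Type) (F : I -> set (X + W)%type) :
  (forall i, glue_open (F i)) -> glue_open (\bigcup_i F i).
Proof.
move=> hF; rewrite /glue_open /glue_closed setC_bigcup.
have c1 : closed (inl @^-1` \bigcap_i ~` F i).
  rewrite preimage_bigcap; apply: closed_bigI => i _; by case: (hF i).
split => //.
  rewrite preimage_bigcap; apply: closed_bigI => i _; by case: (hF i).
move=> z fz i _; case: (hF i) => ci _ si; apply: si.
by apply: (adm_mono c1 ci) fz => x /(_ i Logic.I).
Qed.

HB.instance Definition _ := Choice.on (awglue f).
HB.instance Definition _ := isOpenTopological.Build (awglue f)
  glue_opT glue_opI glue_op_bigU.

Definition inX (q : awglue f) := exists x : X, q = inl x.

Definition perspective (e : set (X * X)) :=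
  closure ((fun p => ((inl p.1 : awglue f), (inl p.2 : awglue f))) @` e)
    `&` ~` [set q : awglue f * awglue f | inX q.1 /\ inX q.2]
  `<=` [set q | exists w : W, q = (inr w, inr w)].

Definition hausdorff_compactification :=
  [/\ compact [set: awglue f], hausdorff_space (awglue f) & dense (range (inl : X -> awglue f))].

Definition Pers (eps : set (set (X * X))) :=
  hausdorff_compactification /\ eps `<=` perspective.

End Glue.

Definition zeta : set (set (nat * nat)) :=
  [set F | finite_set (F `\` [set p | p.1 = p.2])].

Definition eps_of (X : Type) (pi : X -> nat) : set (set (X * X)) :=
  [set e | exists2 F, zeta F & e `<=` (fun p => (pi p.1, pi p.2)) @^-1` F].

Definition coprod_decomp (C X : topologicalType) (pi : X -> nat) :=
  (forall i, open (pi @^-1` [set i])) /\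
  (forall i, exists eta : C -> X,
     [/\ continuous eta, injective eta, range eta = pi @^-1` [set i] &
         forall U, open U -> open (eta @` U)]).

Definition homeomorphic (T U : topologicalType) :=
  exists (h : T -> U) (k : U -> T),
    [/\ cancel h k, cancel k h, continuous h & continuous k].

Arguments Pers {X W} f eps.
Arguments perspective {X W} f e.
Arguments hausdorff_compactification {X W} f.

(* Main.v *)
Require Import Defs.
From HB Require Import structures.
From mathcomp Require Import all_boot all_order all_algebra.
From mathcomp Require Import all_classical all_reals all_analysis.
From mathcomp Require Import ring.

Module M_T1.
Unset Printing Implicit Defensive.
Local Open Scope classical_set_scope.

Section Glue1.
Context {X W : topologicalType} (f : admissible X W).
Local Notation Y := (awglue f).

Lemma glue_closedE (D : set Y) : closed D <-> glue_closed f D.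
Proof.
rewrite -openC; change (glue_open f (~` D) <-> glue_closed f D).
by rewrite /glue_open setCK.
Qed.

Lemma inl_cont : continuous (inl : X -> Y).
Proof.
apply/continuousP => A oA.
have : glue_closed f (~` A) := oA.
by case=> + _ _; rewrite preimage_setC closedC.
Qed.

Lemma closed_preinl {D : set Y} : closed D -> closed (inl @^-1` D).
Proof. by move/glue_closedE => []. Qed.

Lemma closed_preinr {D : set Y} : closed D -> closed (inr @^-1` D).
Proof. by move/glue_closedE => []. Qed.

Lemma adm_sub {D : set Y} : closed D -> f (inl @^-1` D) `<=` inr @^-1` D.
Proof. by move/glue_closedE => []. Qed.

Lemma preinl_inr (K : set W) : (inl @^-1` (inr @` K : set (X + W)%type)) = set0.
Proof. by apply/seteqP; split => // x /= [w]. Qed.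

Lemma preinr_inr (K : set W) : (inr @^-1` (inr @` K : set (X + W)%type)) = K.
Proof. by apply/seteqP; split => [w /= [w' Kw' [<-]]|w Kw] //; exists w. Qed.

Lemma preinr_inl (E : set X) : (inr @^-1` (inl @` E : set (X + W)%type)) = set0.
Proof. by apply/seteqP; split => // x /= [w]. Qed.

Lemma preinl_inl (E : set X) : (inl @^-1` (inl @` E : set (X + W)%type)) = E.
Proof. by apply/seteqP; split => [w /= [w' Kw' [<-]]|w Kw] //; exists w. Qed.

Lemma closed_inr (K : set W) : closed K -> closed (inr @` K : set Y).
Proof.
move=> cK; apply/glue_closedE; split; rewrite ?preinl_inr ?preinr_inr //.
  exact: closed0.
by rewrite adm_set0.
Qed.

Lemma closure_inl (E : set X) (w : W) : closed E ->
  closure (inl @` E : set Y) (inr w) <-> f E w.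
Proof.
move=> cE; split.
  pose D : set Y := inl @` E `|` inr @` (f E).
  have cD : closed D.
    apply/glue_closedE; rewrite /glue_closed /D !preimage_setU.
    rewrite preinl_inl preinl_inr preinr_inl preinr_inr setU0 set0U.
    split => //; exact: adm_closed.
  have h : closure (inl @` E : set Y) `<=` D.
    rewrite (closure_id D).1 //; apply: closureS => ? ?; by left.
  by move=> /h [[x]|[w' ? [<-]]].
move=> fEw.
have cl := @closed_closure Y (inl @` E).
apply: (adm_sub cl); apply: (adm_mono cE _ _ fEw).
  exact: closed_preinl.
by move=> x Ex; apply: subset_closure; exists x.
Qed.

Lemma open_inl (U : set X) : open U -> open (inl @` U : set Y).
Proof.
move=> oU; rewrite -closedC; apply/glue_closedE.
have E1 : inl @^-1` (~` (inl @` U : set Y)) = ~` U.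
  apply/seteqP; split => x /=; first by move=> h Ux; apply: h; exists x.
  by move=> nU [y Uy [e]]; apply: nU; rewrite -e.
have E2 : inr @^-1` (~` (inl @` U : set Y)) = setT.
  by apply/seteqP; split => // x _ /= [y _].
rewrite /glue_closed E1 E2; split => //; by rewrite closedC.
Qed.

Lemma inr_cont : continuous (inr : W -> Y).
Proof.
apply/continuousP => A oA.
have : glue_closed f (~` A) := oA.
by case=> _ + _; rewrite preimage_setC closedC.
Qed.

End Glue1.

End M_T1.
Import M_T1.

Module M_A.
Unset Printing Implicit Defensive.
Import Order.TTheory GRing.Theory Num.Theory.
Local Open Scope classical_set_scope.

Definition bnd (T : set nat) := exists b, forall i, T i -> (i < b)%N.

Section Astruct.
Context {C X : topologicalType} {R : realType} {Z : pseudoMetricType R}.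
Variables (pi : X -> nat) (f : admissible X Z).
Hypothesis hC : compact [set: C].
Hypothesis hd : coprod_decomp C pi.
Hypothesis hP : Pers f (eps_of pi).
Variable c0 : C.
Local Notation Y := (awglue f).

Definition AA (T : set nat) := f (pi @^-1` T).

Lemma preim_open T : open (pi @^-1` T).
Proof.
have -> : pi @^-1` T = \bigcup_(i in T) (pi @^-1` [set i]).
  by apply/seteqP; split => [x Tx|x [i Ti /= ->]] //; exists (pi x).
by apply: bigcup_open => i _; exact: hd.1.
Qed.

Lemma preim_closed T : closed (pi @^-1` T).
Proof. by rewrite -openC preimage_setC; exact: preim_open. Qed.

Lemma AA_closed T : closed (AA T).
Proof. apply: adm_closed; exact: preim_closed. Qed.

Lemma AAU T T' : AA (T `|` T') = AA T `|` AA T'.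
Proof. by rewrite /AA preimage_setU adm_setU //; exact: preim_closed. Qed.

Lemma AA_mono {T T'} : T `<=` T' -> AA T `<=` AA T'.
Proof.
move=> TT'; apply: adm_mono; try exact: preim_closed.
by move=> x /TT'.
Qed.

Lemma AA0 : AA set0 = set0.
Proof. by rewrite /AA preimage_set0 adm_set0. Qed.

Lemma Ycomp : compact [set: Y].
Proof. by case: hP => -[]. Qed.

Lemma Yhaus : hausdorff_space Y.
Proof. by case: hP => -[]. Qed.

Lemma Ydense : dense (range (inl : X -> Y)).
Proof. by case: hP => -[]. Qed.



Lemma fiber_eta i : exists eta : C -> X,
     [/\ continuous eta, injective eta, range eta = pi @^-1` [set i] &
         forall U, open U -> open (eta @` U)].
Proof. exact: hd.2. Qed.

Lemma fiber_compact i : compact (inl @` (pi @^-1` [set i]) : set Y).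
Proof.
have [eta [ce _ re _]] := fiber_eta i.
rewrite -re; apply: continuous_compact.
  apply: continuous_subspaceT => x; exact: inl_cont.
apply: continuous_compact => //.
exact: continuous_subspaceT.
Qed.

Lemma AA1 i : AA [set i] = set0.
Proof.
have cl := compact_closed Yhaus (fiber_compact i).
have := adm_sub f cl; rewrite preinl_inl preinr_inl => h.
by apply/seteqP; split => // z /h.
Qed.

Lemma AA_bnd T : bnd T -> AA T = set0.
Proof.
case=> b; elim: b T => [|b IH] T hT.
  have -> : T = set0 by apply/seteqP; split => // i /hT.
  exact: AA0.
have -> : T = (T `&` [set i | (i < b)%N]) `|` (T `&` [set b]).
  apply/seteqP; split => [i Ti|i]; last by case=> -[].
  have := hT _ Ti; rewrite ltnS leq_eqVlt => /orP[/eqP eib|h].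
    by subst; right.
  by left.
rewrite AAU IH; last by move=> i [].
rewrite set0U; apply/seteqP; split => // z.
have sub : T `&` [set b] `<=` [set b] by move=> i [].
by move/(AA_mono sub); rewrite AA1.
Qed.

Lemma fiber_ne i : exists x, pi x = i.
Proof.
have [eta [_ _ re _]] := fiber_eta i.
exists (eta c0); have : range eta (eta c0) by exists c0.
by rewrite re.
Qed.

Lemma AA_fin T : AA T = set0 -> bnd T.
Proof.
move=> A0; apply: contrapT => nb.
have cK : closed (inl @` (pi @^-1` T) : set Y).
  apply/glue_closedE; split; rewrite ?preinl_inl ?preinr_inl //.
  - exact: preim_closed.
  - exact: closed0.
  - by move: A0; rewrite /AA => ->.
have kK := subclosed_compact cK Ycomp (@subsetT _ _).
pose S m : set Y := inl @` (pi @^-1` (T `&` [set i | (m <= i)%N])).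
have SF : Filter (filter_from [set: nat] S).
  apply: filter_from_filter; first by exists 0%N.
  move=> m m' _ _; exists (maxn m m') => //.
  move=> _ [x [Tx /= le] <-]; split; exists x => //; split => //=.
    by apply: leq_trans le; exact: leq_maxl.
  by apply: leq_trans le; exact: leq_maxr.
have SP : ProperFilter (filter_from [set: nat] S).
  apply: filter_from_proper => m _.
  have [i [Ti lei]] : exists i, T i /\ (m <= i)%N.
    apply: contrapT => hn; apply: nb; exists m => i Ti.
    by rewrite ltnNge; apply/negP => le; apply: hn; exists i.
  have [x px] := fiber_ne i.
  by exists (inl x); exists x => //=; rewrite px.
have [|y [[x Tx <-] cl]] := kK _ SP.
  by exists 0%N => // _ [x [Tx _] <-]; exists x.
have : nbhs (inl x : Y) (inl @` (pi @^-1` [set pi x])).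
  apply: open_nbhs_nbhs; split; first by apply: open_inl; exact: preim_open.
  by exists x.
move=> /(cl (S (pi x).+1)) [].
  by exists (pi x).+1.
move=> _ [[x' [_ /= le] <-] [x'' /= e1 e2]].
by case: e2 => e2; subst; rewrite e1 ltnn in le.
Qed.

Lemma AAT : AA setT = setT.
Proof.
apply/seteqP; split => // w _; rewrite /AA preimage_setT.
apply/(closure_inl f setT w closedT).
move=> B; rewrite nbhsE; case=> O1 [oO Ow] OB.
have [|y [Ox [x _ exy]]] := @Ydense O1 _ oO; first by exists (inr w).
by exists (inl x); split; [exists x|apply: OB; rewrite exy].
Qed.

End Astruct.

End M_A.
Import M_A.

Module M_A2.
Unset Printing Implicit Defensive.
Import Order.TTheory GRing.Theory Num.Theory.
Local Open Scope classical_set_scope.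

Lemma cover_fin (T : topologicalType) (I : eqType) (A : set T) (U : I -> set T) :
  compact A -> (forall i, open (U i)) -> A `<=` \bigcup_i U i ->
  exists s : seq I, forall x, A x -> exists2 i, i \in s & U i x.
Proof.
move=> cA oU cov; apply: contrapT => nc.
pose S (s : seq I) := A `\` [set x | exists2 i, i \in s & U i x].
have SF : Filter (filter_from [set: seq I] S).
  apply: filter_from_filter; first by exists [::].
  move=> s s' _ _; exists (s ++ s') => //.
  move=> x [Ax nx]; split; split => // -[i si Ui]; apply: nx; exists i => //;
    by rewrite mem_cat si ?orbT.
have SP : ProperFilter (filter_from [set: seq I] S).
  apply: filter_from_proper => s _.
  apply: contrapT => ne; apply: nc; exists s => x Ax.
  apply: contrapT => nx; apply: ne; exists x; split => //.
have [|p [Ap clp]] := cA _ SP; first by exists [::] => // x [].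
have [i _ Uip] := cov _ Ap.
have : nbhs p (U i) by apply: open_nbhs_nbhs; split.
move=> /(clp (S [:: i])) [].
  by exists [:: i].
move=> x [[_ nx] Ux]; apply: nx; exists i => //; exact: mem_head.
Qed.

Section KLsec.
Context {C X : topologicalType} {R : realType} {Z : pseudoMetricType R}.
Variables (pi : X -> nat) (f : admissible X Z).
Hypothesis hC : compact [set: C].
Hypothesis hd : coprod_decomp C pi.
Hypothesis hP : Pers f (eps_of pi).
Variable c0 : C.
Hypothesis hZc : compact [set: Z].
Local Notation Y := (awglue f).
Local Notation AA := (AA pi f).

Lemma KL (D : set X) : closed D -> AA (pi @` D) `<=` f D.
Proof.
move=> cD z Az.
have cl1 : closure (inl @` (pi @^-1` (pi @` D)) : set Y) (inr z).
  exact: (proj2 (closure_inl f _ z (preim_closed pi hd _)) Az).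
have [x0 _] := fiber_ne pi hd c0 0.
pose d i := if pselect (exists x, D x /\ pi x = i) is left h then projT1 (cid h) else x0.
have hd' : forall i, (pi @` D) i -> D (d i) /\ pi (d i) = i.
  move=> i [x Dx <-]; rewrite /d; case: pselect => [h|[]]; last by exists x.
  exact: projT2 (cid h).
pose e := [set p : X * X | (pi @` D) (pi p.1) /\ p.2 = d (pi p.1)].
have ee : eps_of pi e.
  exists [set p | p.1 = p.2].
    apply: (sub_finite_set _ (finite_set0 _)); by move=> p [h nh].
  by move=> [a b] [/= hD ->]; have [_ ->] := hd' _ hD.
have pe := hP.2 e ee.
pose B := (fun p : X * X => ((inl p.1 : Y), (inl p.2 : Y))) @` e.
have [w clw] : exists w, closure B (inr z, w).
  have cB : compact (closure B).
    apply: (subclosed_compact (@closed_closure _ B) (compact_setX (Ycomp pi f hP) (Ycomp pi f hP))).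
    by move=> ? _; split.
  have cF : compact (fst @` closure B).
    apply: continuous_compact => //; apply: continuous_subspaceT => q.
    exact: cvg_fst.
  have clF : closed (fst @` closure B) := compact_closed (Yhaus pi f hP) cF.
  have sub : closure (inl @` (pi @^-1` (pi @` D)) : set Y) `<=` fst @` closure B.
    rewrite ((closure_id _).1 clF); apply: closureS => _ [x hx <-].
    exists ((inl x : Y), (inl (d (pi x)) : Y)) => //.
    by apply: subset_closure; exists (x, d (pi x)).
  have [[q1 q2] clq /= eq1] := sub _ cl1.
  by exists q2; rewrite -eq1.
have [w0 []] : [set q | exists w0, q = ((inr w0 : Y), (inr w0 : Y))] ((inr z : Y), w).
  apply: pe; split => //; move=> [[x ex] _]; discriminate ex.
move=> ez ew; subst w; subst w0.
apply/(closure_inl f D z cD) => N nN.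
have nNN : nbhs ((inr z : Y), (inr z : Y)) (N `*` N) by exists (N, N).
have [[a b] [[[x1 x2] [hD1 e2] [<- <-]] [Na Nb]]] := clw _ nNN.
exists (inl x2); split => //; exists x2 => //.
by rewrite /= in e2; subst x2; have [] := hd' _ hD1.
Qed.

Lemma Z_pt : exists z : Z, True.
Proof.
apply: contrapT => nz.
have : AA setT = set0 by apply/seteqP; split => // z; exfalso; apply: nz; exists z.
move/(AA_fin pi f hd hP c0) => [b hb].
by have := hb b I; rewrite ltnn.
Qed.

Lemma S5 (dl : R) : (0 < dl)%R -> exists (n : nat) (c : nat -> Z) (l : nat -> nat),
  (forall i, (l i < n)%N) /\ forall k, AA (l @^-1` [set k]) `<=` ball (c k) dl.
Proof.
move=> dl0.
have [z0 _] := Z_pt.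
have hV : forall z : Z, exists V : set Y,
    nbhs (inr z : Y) V /\ closure V `<=` ~` (inr @` (~` (ball z dl)°)).
  move=> z.
  have rg : {for (inr z : Y), regular_space Y}.
    by apply: (@compact_regular Y (inr z) setT (Yhaus pi f hP) (Ycomp pi f hP)); exact: filterT.
  have nO : nbhs (inr z : Y) (~` (inr @` (~` (ball z dl)°))).
    apply: open_nbhs_nbhs; split.
      rewrite openC; apply: closed_inr; rewrite closedC; exact: open_interior.
    move=> [w nw [ewz]]; apply: nw; rewrite ewz.
    exact: nbhsx_ballx.
  have [V nV sV] := rg _ nO.
  by exists V.
pose V z := projT1 (cid (hV z)).
have Vp z : nbhs (inr z : Y) (V z) /\ closure (V z) `<=` ~` (inr @` (~` (ball z dl)°)).
  exact: (projT2 (cid (hV z))).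
pose U z := inr @^-1` (V z)° : set Z.
have [s cov] : exists s : seq Z, forall x, [set: Z] x -> exists2 i, i \in s & U i x.
  apply: cover_fin => //.
    move=> z; rewrite /U; apply: ((continuousP (inr : Z -> Y)).1 (inr_cont f)).
    exact: open_interior.
  by move=> z _; exists z => //; rewrite /U /=; exact: (Vp z).1.
pose P i (z : Z) := `[< exists x, pi x = i /\ V z (inl x) >].
pose l i := find (P i) s.
exists (size s).+1, (fun k => nth z0 s k), l; split.
  by move=> i; rewrite ltnS; exact: find_size.
move=> k w Aw.
case: (ltnP k (size s)) => [ks|ks].
  pose z := nth z0 s k.
  pose Dk := pi @^-1` (l @^-1` [set k]) `&` inl @^-1` (closure (V z)).
  have cDk : closed Dk.
    apply: closedI; first exact: (preim_closed pi hd).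
    exact: ((continuous_closedP _).1 (inl_cont f) _ (@closed_closure _ _)).
  have eD : pi @` Dk = l @^-1` [set k].
    apply/seteqP; split => [_ [x [h _] <-]|i /= lik] //.
    have hs : has (P i) s by rewrite has_find -/(l i) lik.
    have := nth_find z0 hs; rewrite -/(l i) lik => /asboolP [x [pxi Vx]].
    by exists x => //; split; [rewrite /= pxi|apply: subset_closure].
  have : f Dk w by apply: (KL _ cDk); rewrite eD.
  move/(closure_inl f Dk w cDk) => clw.
  have : closure (V z) (inr w).
    have -> : closure (V z) = closure (closure (V z)).
      exact: (closure_id _).1 (@closed_closure _ _).
    apply: (closureS _ clw) => _ [x [_ cx] <-]; exact: cx.
  move/(Vp z).2 => h; apply: interior_subset; apply: contrapT => nw.
  by apply: h; exists w.
exfalso.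
have [z zs Uzw] := cov w I.
have cl : closure (inl @` (pi @^-1` (l @^-1` [set k])) : set Y) (inr w).
  exact: (proj2 (closure_inl f _ w (preim_closed pi hd _)) Aw).
have [_ [[x /= lk <-] Vx]] := cl _ Uzw.
have hs : has (P (pi x)) s.
  have Pz : P (pi x) z by apply/asboolP; exists x; split => //; exact: interior_subset.
  by apply/hasP; exists z.
by move: hs; rewrite has_find -/(l (pi x)) lk ltnNge ks.
Qed.

End KLsec.

End M_A2.
Import M_A2.

Module M_BF.
Unset Printing Implicit Defensive.
Local Open Scope classical_set_scope.

Lemma bnd_seq (s : seq nat) : exists m, forall x, x \in s -> (x < m)%N.
Proof.
elim: s => [|a s [m hm]]; first by exists 0%N.
exists (maxn a.+1 m) => x; rewrite in_cons => /orP[/eqP ->|/hm h].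
  by rewrite leq_max leqnn.
by rewrite leq_max h orbT.
Qed.

Lemma key1 (p : seq (nat * nat)) i j j' : uniq (unzip1 p) ->
  (i, j) \in p -> (i, j') \in p -> j = j'.
Proof.
elim: p => [//|[a b] p IH] /= /andP[na up].
rewrite !in_cons => /orP[/eqP [e1 e2]|h1] /orP[/eqP [e3 e4]|h2]; subst => //.
- by move: na => /negP []; apply/mapP; exists (a, j').
- by move: na => /negP []; apply/mapP; exists (a, j).
- exact: IH.
Qed.

Lemma key2 (p : seq (nat * nat)) i i' j : uniq (unzip2 p) ->
  (i, j) \in p -> (i', j) \in p -> i = i'.
Proof.
elim: p => [//|[a b] p IH] /= /andP[na up].
rewrite !in_cons => /orP[/eqP [e1 e2]|h1] /orP[/eqP [e3 e4]|h2]; subst => //.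
- by move: na => /negP []; apply/mapP; exists (i', b).
- by move: na => /negP []; apply/mapP; exists (i, b).
- exact: IH.
Qed.

Section BF.
Variable G : nat -> nat -> nat -> Prop.
Hypothesis Gmono : forall k i j, G k.+1 i j -> G k i j.
Hypothesis G0 : forall i j, G 0 i j.
Hypothesis hF : forall k, exists N, forall i, (N <= i)%N -> forall m, exists j, (m <= j)%N /\ G k i j.
Hypothesis hB : forall k, exists N, forall j, (N <= j)%N -> forall m, exists i, (m <= i)%N /\ G k i j.

Lemma Gmono' k k' i j : (k <= k')%N -> G k' i j -> G k i j.
Proof.
move=> kk'; elim: k' kk' => [|k' IH]; first by rewrite leqn0 => /eqP ->.
rewrite leq_eqVlt => /orP[/eqP -> //|]; rewrite ltnS => h /Gmono; exact: IH.
Qed.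

Definition PF i k := forall m, exists j, (m <= j)%N /\ G k i j.
Definition PB j k := forall m, exists i, (m <= i)%N /\ G k i j.

Fixpoint levF_aux i k := match k with
  | 0 => 0%N | k'.+1 => if `[< PF i k >] then k else levF_aux i k' end.
Fixpoint levB_aux j k := match k with
  | 0 => 0%N | k'.+1 => if `[< PB j k >] then k else levB_aux j k' end.
Definition levF i := levF_aux i i.
Definition levB j := levB_aux j j.

Lemma levF_aux_P i k : PF i (levF_aux i k).
Proof.
elim: k => [|k IH] /=; first by move=> m; exists m; split.
by case: asboolP.
Qed.

Lemma levB_aux_P j k : PB j (levB_aux j k).
Proof.
elim: k => [|k IH] /=; first by move=> m; exists m; split.
by case: asboolP.
Qed.

Lemma levF_aux_ge i k K : (K <= k)%N -> PF i K -> (K <= levF_aux i k)%N.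
Proof.
elim: k => [|k IH]; first by rewrite leqn0 => /eqP ->.
rewrite leq_eqVlt => /orP[/eqP -> /=|]; first by case: asboolP.
rewrite ltnS => Kk PK /=; case: asboolP => _.
  by apply: leq_trans Kk _.
exact: IH.
Qed.

Lemma levB_aux_ge j k K : (K <= k)%N -> PB j K -> (K <= levB_aux j k)%N.
Proof.
elim: k => [|k IH]; first by rewrite leqn0 => /eqP ->.
rewrite leq_eqVlt => /orP[/eqP -> /=|]; first by case: asboolP.
rewrite ltnS => Kk PK /=; case: asboolP => _.
  by apply: leq_trans Kk _.
exact: IH.
Qed.

Lemma levF_big K : exists N, forall i, (N <= i)%N -> (K <= levF i)%N.
Proof.
have [N hN] := hF K; exists (maxn N K) => i; rewrite geq_max => /andP[Ni Ki].
apply: levF_aux_ge => //; exact: hN.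
Qed.

Lemma levB_big K : exists N, forall j, (N <= j)%N -> (K <= levB j)%N.
Proof.
have [N hN] := hB K; exists (maxn N K) => i; rewrite geq_max => /andP[Ni Ki].
apply: levB_aux_ge => //; exact: hN.
Qed.

Lemma freshj (p : seq (nat * nat)) i : exists j, j \notin unzip2 p /\ G (levF i) i j.
Proof.
have [m hm] := bnd_seq (unzip2 p).
have [j [mj Gj]] := levF_aux_P i i m.
exists j; split => //; apply/negP => /hm; rewrite ltnNge mj.
by [].
Qed.

Lemma freshi (p : seq (nat * nat)) j : exists i, i \notin unzip1 p /\ G (levB j) i j.
Proof.
have [m hm] := bnd_seq (unzip1 p).
have [i [mi Gi]] := levB_aux_P j j m.
exists i; split => //; apply/negP => /hm; rewrite ltnNge mi.
by [].
Qed.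

Definition pickj p i := projT1 (cid (freshj p i)).
Definition picki p j := projT1 (cid (freshi p j)).

Definition forth (p : seq (nat * nat)) s :=
  if s \in unzip1 p then p else (s, pickj p s) :: p.
Definition back (p : seq (nat * nat)) s :=
  if s \in unzip2 p then p else (picki p s, s) :: p.
Fixpoint st (s : nat) : seq (nat * nat) :=
  match s with 0 => [::] | s'.+1 => back (forth (st s') s') s' end.

Definition Inv (p : seq (nat * nat)) :=
  [/\ uniq (unzip1 p), uniq (unzip2 p) &
      forall i j, (i, j) \in p -> G (levF i) i j \/ G (levB j) i j].

Lemma Inv_forth p s : Inv p -> Inv (forth p s).
Proof.
rewrite /forth; case: ifP => // ns [u1 u2 hG].
have [nj Gj] := projT2 (cid (freshj p s)).
split => /=.
- by rewrite ns.
- by rewrite nj.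
- move=> i j; rewrite in_cons => /orP[/eqP [-> ->]|/hG] //; by left.
Qed.

Lemma Inv_back p s : Inv p -> Inv (back p s).
Proof.
rewrite /back; case: ifP => // ns [u1 u2 hG].
have [ni Gi] := projT2 (cid (freshi p s)).
split => /=.
- by rewrite ni.
- by rewrite ns.
- move=> i j; rewrite in_cons => /orP[/eqP [-> ->]|/hG] //; by right.
Qed.

Lemma Inv_st s : Inv (st s).
Proof.
elim: s => [|s IH] /=; first by split.
exact/Inv_back/Inv_forth.
Qed.

Lemma st_mono s t : (s <= t)%N -> {subset st s <= st t}.
Proof.
elim: t => [|t IH]; first by rewrite leqn0 => /eqP ->.
rewrite leq_eqVlt => /orP[/eqP -> //|]; rewrite ltnS => /IH h x /h xs /=.
have xf : x \in forth (st t) t.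
  by rewrite /forth; case: ifP => _ //; rewrite in_cons xs orbT.
by rewrite /back; case: ifP => _ //; rewrite in_cons xf orbT.
Qed.

Lemma st_dom s : exists j, (s, j) \in st s.+1.
Proof.
have hf : s \in unzip1 (forth (st s) s).
  by rewrite /forth; case: ifP => h //=; rewrite in_cons eqxx.
have : s \in unzip1 (st s.+1).
  by rewrite /= /back; case: ifP => _ //=; rewrite in_cons hf orbT.
by case/mapP => -[a b] h /= e; exists b; move: h; rewrite -e.
Qed.

Lemma st_rng s : exists i, (i, s) \in st s.+1.
Proof.
have : s \in unzip2 (st s.+1).
  by rewrite /= /back; case: ifP => h //=; rewrite in_cons eqxx.
by case/mapP => -[a b] h /= e; exists a; move: h; rewrite -e.
Qed.

Definition sig_ i := projT1 (cid (st_dom i)).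
Definition tau_ j := projT1 (cid (st_rng j)).

Lemma sig_mem i t : (i < t)%N -> (i, sig_ i) \in st t.
Proof. by move=> it; apply: (@st_mono i.+1 t it); exact: (projT2 (cid (st_dom i))). Qed.

Lemma tau_mem j t : (j < t)%N -> (tau_ j, j) \in st t.
Proof. by move=> jt; apply: (@st_mono j.+1 t jt); exact: (projT2 (cid (st_rng j))). Qed.

Lemma sigK : cancel sig_ tau_.
Proof.
move=> i; set j := sig_ i; set t := (maxn i j).+1.
have h1 : (i, j) \in st t by apply: sig_mem; rewrite ltnS leq_maxl.
have h2 : (tau_ j, j) \in st t by apply: tau_mem; rewrite ltnS leq_maxr.
by have [_ u2 _] := Inv_st t; exact: (key2 _ _ _ _ u2 h2 h1).
Qed.

Lemma tauK : cancel tau_ sig_.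
Proof.
move=> j; set i := tau_ j; set t := (maxn i j).+1.
have h1 : (i, sig_ i) \in st t by apply: sig_mem; rewrite ltnS leq_maxl.
have h2 : (i, j) \in st t by apply: tau_mem; rewrite ltnS leq_maxr.
by have [u1 _ _] := Inv_st t; exact: (key1 _ _ _ _ u1 h1 h2).
Qed.

Lemma sig_G K : exists N, forall i, (N <= i)%N -> G K i (sig_ i).
Proof.
have [N1 h1] := levF_big K.
have [N2 h2] := levB_big K.
pose N3 := (\max_(j < N2) tau_ j).+1.
exists (maxn N1 N3) => i; rewrite geq_max => /andP[iN1 iN3].
have s2 : (N2 <= sig_ i)%N.
  rewrite leqNgt; apply/negP => lt.
  have := @leq_bigmax_cond _ xpredT (fun j : 'I_N2 => tau_ j) (Ordinal lt) is_true_true.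
  rewrite /= sigK => h; have := leq_trans iN3 h; by rewrite ltnn.
have [_ _ hG] := Inv_st i.+1.
case: (hG _ _ (@sig_mem i i.+1 (ltnSn i))) => hg.
  exact: Gmono' (h1 _ iN1) hg.
exact: Gmono' (h2 _ s2) hg.
Qed.

End BF.


Lemma back_and_forth (G : nat -> nat -> nat -> Prop) :
  (forall k i j, G k.+1 i j -> G k i j) -> (forall i j, G 0 i j) ->
  (forall k, exists N, forall i, (N <= i)%N -> forall m, exists j, (m <= j)%N /\ G k i j) ->
  (forall k, exists N, forall j, (N <= j)%N -> forall m, exists i, (m <= i)%N /\ G k i j) ->
  exists sg tu : nat -> nat, [/\ cancel sg tu, cancel tu sg &
     forall k, exists N, forall i, (N <= i)%N -> G k i (sg i)].
Proof.
move=> Gm G0 hF hB.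
exists (sig_ G G0), (tau_ G G0); split.
- exact: sigK.
- exact: tauK.
- exact: sig_G.
Qed.

End M_BF.
Import M_BF.

Module M_Comb.
Unset Printing Implicit Defensive.
Import Order.TTheory GRing.Theory Num.Theory.
Local Open Scope classical_set_scope.
Local Open Scope ring_scope.

Definition dl {R : realType} (K : nat) : R := (K.+1%:R)^-1.

Lemma dl_gt0 {R : realType} K : 0 < @dl R K.
Proof. by rewrite /dl invr_gt0 ltr0n. Qed.

Record good {R : realType} {Z : pseudoMetricType R} (A : set nat -> set Z) : Prop := Good {
  g_closed : forall T, closed (A T);
  g_U : forall T T', A (T `|` T') = A T `|` A T';
  g_bnd : forall T, bnd T -> A T = set0;
  g_fin : forall T, A T = set0 -> bnd T;
  g_T : A setT = setT;
  g_S5 : forall e : R, 0 < e -> exists (n : nat) (c : nat -> Z) (l : nat -> nat),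
     (forall i, (l i < n)%N) /\ forall k, A (l @^-1` [set k]) `<=` ball (c k) e }.

Arguments g_closed {R Z A}.
Arguments g_U {R Z A}.
Arguments g_bnd {R Z A}.
Arguments g_fin {R Z A}.
Arguments g_T {R Z A}.
Arguments g_S5 {R Z A}.

Section Good.
Context {R : realType} {Z : pseudoMetricType R} {A : set nat -> set Z}.
Hypothesis gA : good A.

Lemma g_mono {T T'} : T `<=` T' -> A T `<=` A T'.
Proof.
move=> TT'; have -> : T' = T `|` T' by rewrite setUidr.
rewrite (g_U gA); exact: subsetUl.
Qed.

Lemma g_ne {S z} : A S z -> exists i, S i.
Proof.
move=> ASz; apply: contrapT => ne.
have : bnd S by exists 0%N => i Si; exfalso; apply: ne; exists i.
by move/(g_bnd gA) => e; rewrite e in ASz.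
Qed.

Lemma g_unb {S z} : A S z -> forall m, exists i, S i /\ (m <= i)%N.
Proof.
move=> ASz m; apply: contrapT => ne.
have : bnd S.
  exists m => i Si; rewrite ltnNge; apply/negP => le; apply: ne; by exists i.
by move/(g_bnd gA) => e; rewrite e in ASz.
Qed.

Lemma levels_ex : exists (n : nat -> nat) (c : nat -> nat -> Z) (L : nat -> nat -> nat),
  forall K, (forall i, (L K i < n K)%N) /\ forall l, A (L K @^-1` [set l]) `<=` ball (c K l) (dl K).
Proof.
have h : forall K : nat, exists t : (nat * (nat -> Z) * (nat -> nat)),
   (forall i, (t.2 i < t.1.1)%N) /\ forall l, A (t.2 @^-1` [set l]) `<=` ball (t.1.2 l) (dl K).
  move=> K; have [n [c [l [h1 h2]]]] := g_S5 gA _ (dl_gt0 K).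
  by exists (n, c, l).
have [e he] := choice h.
by exists (fun K => (e K).1.1), (fun K => (e K).1.2), (fun K => (e K).2).
Qed.

Lemma refine1 {L : nat -> nat} {n S z} : (forall i, (L i < n)%N) -> A S z ->
  exists l, A (S `&` L @^-1` [set l]) z.
Proof.
move=> hn ASz.
suff : forall m, A (S `&` [set i | (L i < m)%N]) z -> exists l, A (S `&` L @^-1` [set l]) z.
  move/(_ n); apply; have -> // : S `&` [set i | (L i < n)%N] = S.
  by apply/seteqP; split => [i []|i Si] //; split => //; exact: hn.
elim => [|m IH].
  have -> : S `&` [set i | (L i < 0)%N] = set0 by apply/seteqP; split => // i [].
  by rewrite (g_bnd gA) //; exists 0%N.
have -> : S `&` [set i | (L i < m.+1)%N] =
    (S `&` [set i | (L i < m)%N]) `|` (S `&` L @^-1` [set m]).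
  apply/seteqP; split => [i [Si]|i [[Si h]|[Si h]]] /=.
  - rewrite ltnS leq_eqVlt => /orP[/eqP ->|h]; [right|left]; by split.
  - by split => //; apply: ltnW.
  - by split => //; rewrite h.
by rewrite (g_U gA) => -[/IH|h] //; exists m.
Qed.

Definition Qc (L : nat -> nat -> nat) k i := [set i' | forall K, (K < k)%N -> L K i' = L K i].

Lemma refine (L : nat -> nat -> nat) (n : nat -> nat) k S z :
  (forall K i, (L K i < n K)%N) -> A S z -> exists i, S i /\ A (S `&` Qc L k i) z.
Proof.
move=> hn ASz; elim: k => [|k [i [Si h]]].
  have [i Si] := g_ne ASz; exists i; split => //.
  by have -> : S `&` Qc L 0 i = S by apply/seteqP; split => [j []|j Sj] //; split.
have [l hl] := refine1 (hn k) h.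
have [i' [[Si' Qi'] Li']] := g_ne hl.
exists i'; split => //.
have sub : (S `&` Qc L k i) `&` L k @^-1` [set l] `<=` S `&` Qc L k.+1 i'.
  move=> j [[Sj Qj] Lj]; split => // K; rewrite ltnS leq_eqVlt => /orP[/eqP ->|Kk].
    by rewrite Lj Li'.
  by rewrite Qj // Qi'.
exact: (g_mono sub _ hl).
Qed.

End Good.

Lemma ball_mid {R : realType} {Z : pseudoMetricType R} (a b z : Z) (e : R) :
  ball a e z -> ball b e z -> ball a (2 * e) b.
Proof.
move=> h1 h2; rewrite mulr2n mulrDl mul1r.
by apply: (ball_triangle h1); apply: ball_sym.
Qed.

Lemma big_sig (sg tu : nat -> nat) : cancel sg tu ->
  forall m, exists M, forall i, (M <= i)%N -> (m <= sg i)%N.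
Proof.
move=> sK m; exists (\max_(j < m) tu j).+1 => i iM.
rewrite leqNgt; apply/negP => lt.
have := @leq_bigmax_cond _ xpredT (fun j : 'I_m => tu j) (Ordinal lt) is_true_true.
rewrite /= sK => h; have := leq_trans iM h; by rewrite ltnn.
Qed.

Section Two.
Context {R : realType} {Z : pseudoMetricType R} (A A' : set nat -> set Z).
Hypotheses (gA : good A) (gA' : good A').
Variables (n n' : nat -> nat) (c c' : nat -> nat -> Z) (L L' : nat -> nat -> nat).
Hypothesis hl : forall K, (forall i, (L K i < n K)%N) /\
  forall l, A (L K @^-1` [set l]) `<=` ball (c K l) (dl K).
Hypothesis hl' : forall K, (forall i, (L' K i < n' K)%N) /\
  forall l, A' (L' K @^-1` [set l]) `<=` ball (c' K l) (dl K).

Definition GG k i j := forall K, (K < k)%N -> ball (c K (L K i)) (2 * dl K) (c' K (L' K j)).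

Lemma Fprop k : exists N, forall i, (N <= i)%N -> forall m, exists j, (m <= j)%N /\ GG k i j.
Proof.
have hn K i := (hl K).1 i.
have hn' K i := (hl' K).1 i.
pose E := [set i | A (Qc L k i) = set0].
have [N hN] : bnd E.
  apply: (g_fin gA); apply/seteqP; split => // z Ez.
  have [i [Ei h]] := refine gA _ _ k _ _ hn Ez.
  have sub : E `&` Qc L k i `<=` Qc L k i by move=> ? [].
  by have := g_mono gA sub _ h; rewrite Ei.
exists N => i Ni m.
have nE : ~ E i by move/hN; rewrite ltnNge Ni.
have [z Az] : exists z, A (Qc L k i) z.
  apply: contrapT => nz; apply: nE; apply/seteqP; split => // z h.
  by apply: nz; exists z.
have : A' setT z by rewrite (g_T gA').
move/(refine gA' _ _ k _ _ hn') => [j0 [_ h0]].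
have [j [[_ Qj] mj]] := g_unb gA' h0 m.
exists j; split => // K Kk; apply: (@ball_mid _ _ _ _ z).
  apply: ((hl K).2 (L K i)); apply: (g_mono gA _ _ Az) => i' Qi'.
  by rewrite /= Qi'.
apply: ((hl' K).2 (L' K j)); apply: (g_mono gA' _ _ h0) => j' [_ Qj'].
by rewrite /= Qj' // Qj.
Qed.

Lemma Fin (sg tu : nat -> nat) : cancel sg tu -> cancel tu sg ->
  (forall K, exists N, forall i, (N <= i)%N -> GG K.+1 i (sg i)) ->
  forall T, A T `<=` A' (sg @` T).
Proof.
move=> sK tK hG T z Az.
rewrite ((closure_id _).1 (g_closed gA' _)) => B /nbhs_ballP [e /= e0 eB].
pose K := Num.truncn (4 / e).
have hK : 4 * dl K < e.
  have := Num.Theory.truncnS_gt (4 / e); rewrite ltr_pdivrMr // => h.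
  by rewrite /dl ltr_pdivrMr ?ltr0n // mulrC.
have [b hb] := hG K.
pose T1 := T `&` [set i | (b <= i)%N].
have AT1 : A T1 z.
  have : A (T1 `|` (T `&` [set i | (i < b)%N])) z.
    apply: (g_mono gA _ _ Az) => i Ti; case: (leqP b i) => h; [left|right]; by split.
  rewrite (g_U gA) => -[] // h.
  by rewrite (g_bnd gA) in h => //; exists b => i [].
have [l hl2] := refine1 gA ((hl K).1) AT1.
set T2 := T1 `&` L K @^-1` [set l] in hl2.
have zl : ball (c K l) (dl K) z.
  have sub : T2 `<=` L K @^-1` [set l] by move=> i [].
  by apply: (hl K).2; exact: (g_mono gA sub _ hl2).
have [w Aw] : exists w, A' (sg @` T2) w.
  apply: contrapT => nw.
  have : A' (sg @` T2) = set0 by apply/seteqP; split => // w h; apply: nw; exists w.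
  move/(g_fin gA') => [b' hb'].
  have [M hM] := big_sig _ _ sK b'.
  have [i [T2i Mi]] := g_unb gA hl2 M.
  have := hb' (sg i) (ex_intro2 _ _ i T2i erefl).
  by rewrite ltnNge hM.
have [l' hl3] := refine1 gA' ((hl' K).1) Aw.
have wl : ball (c' K l') (dl K) w.
  have sub : sg @` T2 `&` L' K @^-1` [set l'] `<=` L' K @^-1` [set l'] by move=> i [].
  by apply: (hl' K).2; exact: (g_mono gA' sub _ hl3).
have [_ [[i [[Ti bi] Li] <-] L'i]] := g_ne gA' hl3.
have Gi := hb i bi K (ltnSn K); rewrite Li L'i /= in Gi.
exists w; split.
  by apply: (g_mono gA' _ _ Aw) => _ [j [[Tj _] _] <-]; exists j.
apply: eB; apply: (le_ball (e1 := 4 * dl K)); first exact: ltW.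
have -> : 4 * dl K = dl K + (2 * dl K + dl K) :> R.
  ring.
apply: (ball_triangle (ball_sym zl)); apply: (ball_triangle Gi); exact: wl.
Qed.

End Two.

End M_Comb.
Import M_Comb.

Module M_H.
Unset Printing Implicit Defensive.
Local Open Scope classical_set_scope.

Section Eta.
Context {C X : topologicalType} (pi : X -> nat) (hd : coprod_decomp C pi).

Definition etaF i : C -> X := projT1 (cid (hd.2 i)).

Lemma etaP i : [/\ continuous (etaF i), injective (etaF i),
   range (etaF i) = pi @^-1` [set i] & forall U, open U -> open (etaF i @` U)].
Proof. exact: projT2 (cid (hd.2 i)). Qed.

Lemma pi_eta i c : pi (etaF i c) = i.
Proof.
have [_ _ re _] := etaP i.
have h : range (etaF i) (etaF i c) by exists c.
by move: h; rewrite re.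
Qed.

Lemma ex_iota x : exists c, etaF (pi x) c = x.
Proof.
have [_ _ re _] := etaP (pi x).
have h : (pi @^-1` [set pi x]) x by [].
by move: h; rewrite -re => -[c _ e]; exists c.
Qed.

Definition iota x : C := projT1 (cid (ex_iota x)).

Lemma etaK x : etaF (pi x) (iota x) = x.
Proof. exact: projT2 (cid (ex_iota x)). Qed.

Lemma iota_eta i c : iota (etaF i c) = c.
Proof.
have [_ inj _ _] := etaP i.
apply: inj; have := etaK (etaF i c); rewrite pi_eta => ->.
by [].
Qed.

End Eta.

Section Hmap.
Context {C X : topologicalType} (pi pi' : X -> nat).
Variables (hd : coprod_decomp C pi) (hd' : coprod_decomp C pi').
Variable sg : nat -> nat.

Definition Hm x := etaF pi' hd' (sg (pi x)) (iota pi hd x).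

Lemma Hm_cont : continuous Hm.
Proof.
apply/continuousP => U oU.
have -> : Hm @^-1` U = \bigcup_i (etaF pi hd i @` (etaF pi' hd' (sg i) @^-1` U)).
  apply/seteqP; split => x.
    by move=> hx; exists (pi x) => //; exists (iota pi hd x) => //; exact: etaK.
  move=> [i _ [c hc <-]]; rewrite /Hm /= pi_eta iota_eta; exact: hc.
apply: bigcup_open => i _; have [_ _ _ om] := etaP pi hd i; apply: om.
have [ce _ _ _] := etaP pi' hd' (sg i).
exact: ((continuousP _).1 ce).
Qed.

Lemma pi_Hm x : pi' (Hm x) = sg (pi x).
Proof. exact: pi_eta. Qed.

Lemma iota_Hm x : iota pi' hd' (Hm x) = iota pi hd x.
Proof. exact: iota_eta. Qed.

End Hmap.

Lemma HmK {C X : topologicalType} (pi pi' : X -> nat)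
  (hd : coprod_decomp C pi) (hd' : coprod_decomp C pi') (sg tu : nat -> nat) :
  cancel sg tu -> cancel (Hm pi pi' hd hd' sg) (Hm pi' pi hd' hd tu).
Proof.
move=> sK x; rewrite /Hm pi_Hm iota_Hm sK; exact: etaK.
Qed.

Section Glue2.
Context {C X : topologicalType} {R : realType} {Z : pseudoMetricType R}.
Variables (pi pi' : X -> nat) (hd : coprod_decomp C pi) (hd' : coprod_decomp C pi').
Variables (f g : admissible X Z) (hg : Pers g (eps_of pi')) (c0 : C).
Variables (sg tu : nat -> nat) (sK : cancel sg tu) (tK : cancel tu sg).
Hypothesis heq : forall T, AA pi f T = AA pi' g (sg @` T).

Definition hm (q : awglue f) : awglue g :=
  match q with inl x => inl (Hm pi pi' hd hd' sg x) | inr z => inr z end.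

Lemma hm_cont : continuous hm.
Proof.
apply/continuous_closedP => D cD.
pose H := Hm pi pi' hd hd' sg.
pose H' := Hm pi' pi hd' hd tu.
have HK : cancel H' H by exact: HmK.
have cE : closed (H @^-1` (inl @^-1` D)).
  exact: ((continuous_closedP _).1 (Hm_cont pi pi' hd hd' sg) _ (closed_preinl g cD)).
apply/glue_closedE; split.
- exact: cE.
- exact: (closed_preinr g cD).
- move=> z fz; apply: (adm_sub g cD).
  apply: (KL pi' g hd' hg c0 _ (closed_preinl g cD)).
  have : AA pi f (pi @` (H @^-1` (inl @^-1` D))) z.
    rewrite /AA; apply: (adm_mono cE (preim_closed pi hd _) _ fz).
    by move=> x Ex; exists x.
  rewrite heq; suff -> : sg @` (pi @` (H @^-1` (inl @^-1` D))) = pi' @` (inl @^-1` D) by [].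
  apply/seteqP; split.
    by move=> _ [_ [x Ex <-] <-]; exists (H x) => //; rewrite pi_Hm.
  move=> _ [y Dy <-]; exists (pi (H' y)).
    by exists (H' y) => //=; rewrite /preimage /= HK.
  by have := pi_Hm pi pi' hd hd' sg (H' y); rewrite -/H HK => <-.
Qed.
End Glue2.

End M_H.
Import M_H.
Unset Printing Implicit Defensive.
Local Open Scope classical_set_scope.

Lemma good_AA {C X : topologicalType} {R : realType} {Z : pseudoMetricType R}
  (pi : X -> nat) (f : admissible X Z) (hd : coprod_decomp C pi)
  (hC : compact [set: C]) (hP : Pers f (eps_of pi)) (c0 : C) (hZc : compact [set: Z]) :
  good (AA pi f).
Proof.
split.
- exact: AA_closed hd.
- exact: AAU hd.
- exact: AA_bnd hC hd hP.
- exact: AA_fin hd hP c0.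
- exact: AAT hP.
- exact: S5 hd hP c0 hZc.
Qed.

Theorem mainTheorem7 (C X : topologicalType) (R : realType)
  (Z : pseudoMetricType R) (pi pi' : X -> nat) (f g : admissible X Z) :
  compact [set: C] -> hausdorff_space C ->
  coprod_decomp C pi -> coprod_decomp C pi' ->
  compact [set: Z] -> hausdorff_space Z ->
  Pers f (eps_of pi) -> Pers g (eps_of pi') ->
  homeomorphic (awglue f) (awglue g).
Proof.
move=> hC hCh hd hd' hZc hZh hPf hPg.
case: (pselect (exists c : C, True)) => [[c0 _]|nC]; last first.
  have nX : forall x : X, False.
    by move=> x; have [c _] := ex_iota pi hd x; apply: nC; exists c.
  have nZ : forall z : Z, False.
    move=> z; have [] := Ydense pi f hPf setT _ openT; first by exists (inr z).
    by move=> y [_ [x _ _]]; exact: nX x.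
  exists (fun q : awglue f => (q : awglue g)), (fun q : awglue g => (q : awglue f)).
  split; try by [].
  - by move=> q; case: q => [x|z]; [case: (nX x)|case: (nZ z)].
  - by move=> q; case: q => [x|z]; [case: (nX x)|case: (nZ z)].
have gA := good_AA pi f hd hC hPf c0 hZc.
have gA' := good_AA pi' g hd' hC hPg c0 hZc.
have [n [c [L hl]]] := levels_ex gA.
have [n' [c' [L' hl']]] := levels_ex gA'.
have [sg [tu [sK tK hG]]] : exists sg tu : nat -> nat, [/\ cancel sg tu, cancel tu sg &
     forall k, exists N, forall i, (N <= i)%N -> GG c c' L L' k i (sg i)].
  apply: back_and_forth.
  - by move=> k i j h K Kk; apply: h; apply: ltnW.
  - by [].
  - exact: (Fprop _ _ gA gA' _ _ _ _ _ _ hl hl').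
  - move=> k; have [N hN] := Fprop _ _ gA' gA _ _ _ _ _ _ hl' hl k.
    exists N => j Nj m; have [i [mi hi]] := hN j Nj m.
    by exists i; split => // K Kk; apply: ball_sym; exact: hi.
have e1 : forall T, AA pi f T `<=` AA pi' g (sg @` T).
  apply: (Fin _ _ gA gA' _ _ _ _ _ _ hl hl' _ _ sK tK) => K; exact: hG.
have e2 : forall T, AA pi' g T `<=` AA pi f (tu @` T).
  apply: (Fin _ _ gA' gA _ _ _ _ _ _ hl' hl _ _ tK sK) => K.
  have [N hN] := hG K.+1.
  have [M hM] := big_sig tu sg tK N.
  exists M => j Mj K' K'K; apply: ball_sym.
  by have := hN _ (hM _ Mj) K' K'K; rewrite tK.
have heq : forall T, AA pi f T = AA pi' g (sg @` T).
  move=> T; apply/seteqP; split; first exact: e1.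
  move=> z /e2; rewrite image_comp.
  suff -> : (tu \o sg) @` T = T by [].
  apply/seteqP; split => [_ [x Tx <-]|x Tx]; first by rewrite /= sK.
  by exists x => //=; rewrite sK.
have heq' : forall T, AA pi' g T = AA pi f (tu @` T).
  move=> T; rewrite heq image_comp.
  suff -> : (sg \o tu) @` T = T by [].
  apply/seteqP; split => [_ [x Tx <-]|x Tx]; first by rewrite /= tK.
  by exists x => //=; rewrite tK.
exists (hm pi pi' hd hd' f g sg), (hm pi' pi hd' hd g f tu); split.
- by case=> [x|z] //=; rewrite HmK.
- by case=> [x|z] //=; rewrite HmK.
- exact: (hm_cont pi pi' hd hd' f g hPg c0 sg tu tK heq).
- exact: (hm_cont pi' pi hd' hd g f hPf c0 tu sg sK heq').
Qed.
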